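(* Let $X$ be a random variable taking values in $[0,1]$ with law $P$, and let $\widehat X\in[0,1)$ be a nonrandom number. Then for every $\xi\in[-1,1]$, \[ \mathbb{E}_P\exp\left\{\xi\,(X-\mathbb{E}_P[X])-\xi^2\,\psi_E(|X-\widehat X|)\right\}\le 1 . \]
   Context: $\psi_E(x)=-\log(1-x)-x$ for $x\in[0,1)$, and $\psi_E(1):=+\infty$. Conventions: $0\cdot(+\infty)=0$ and $\exp(-\infty)=0$. *)

(* Defs.v *)
From HB Require Import structures.
From mathcomp Require Import all_boot all_order all_algebra.
From mathcomp Require Import all_classical all_reals all_analysis.
Set Implicit Arguments. Unset Strict Implicit. Unset Printing Implicit Defensive.
Import Order.TTheory GRing.Theory Num.Theory.
Local Open Scope ring_scope.

(* psi_E(x) = -log(1-x) - x for x in [0,1), and psi_E(1) = +oo.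
   (Only ever applied to arguments in [0,1]; for x >= 1 we return +oo.) *)
Definition psiE {R : realType} (x : R) : \bar R :=
  if x < 1 then (- ln (1 - x) - x)%:E else +oo%E.

(* Main.v *)
Require Import Defs.
From HB Require Import structures.
From mathcomp Require Import all_boot all_order all_algebra.
From mathcomp Require Import all_classical all_reals all_analysis.
Import Order.TTheory GRing.Theory Num.Theory.
From mathcomp Require Import ring lra.
Import numFieldNormedType.Exports.
Local Open Scope classical_set_scope.
Local Open Scope ring_scope.

Lemma key (R : realType) (c a : R) : -1 <= c <= 1 -> 0 <= a < 1 ->
  0 <= ln (1 + c * a) - c * a + c ^+ 2 * (- ln (1 - a) - a).
Proof.
move=> /andP[c1 c2] /andP[a0 a1].
pose g1 : R -> R := cst 1 + c \*: (@id R).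
pose g2 : R -> R := cst 1 - (@id R).
pose f : R -> R := ((@ln R) \o g1) - (c \*: (@id R)) + c ^+ 2 \*: (- ((@ln R) \o g2) - (@id R)).
pose df := fun x : R => (1 + c * x)^-1 * c - c + c ^+ 2 * (- ((1 - x)^-1 * (-1)) - 1).
have pos (x : R) : 0 <= x -> x < 1 -> 0 < 1 + c * x /\ 0 < 1 - x.
  move=> x0 x1; split; nra.
have der (x : R) : 0 <= x -> x < 1 -> is_derive x 1 f (df x).
  move=> x0 x1; have [p1 p2] := pos x x0 x1.
  have h1 : is_derive x 1 g1 c.
    apply: (is_derive_eq (is_deriveD (is_derive_cst (1:R) x 1) (is_deriveZ c (is_derive_id x 1)))).
    by rewrite add0r /= -[RHS]mulr1.
  have h2 : is_derive x 1 g2 (-1).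
    apply: (is_derive_eq (is_deriveB (is_derive_cst (1:R) x 1) (is_derive_id x 1))).
    by rewrite add0r.
  have l1 := @is_derive1_comp R (@ln R) g1 x _ _ (is_derive1_ln p1) h1.
  have l2 := @is_derive1_comp R (@ln R) g2 x _ _ (is_derive1_ln p2) h2.
  apply: (is_derive_eq (is_deriveD (is_deriveB l1 (is_deriveZ c (is_derive_id x 1)))
     (is_deriveZ (c ^+ 2) (is_deriveB (is_deriveN l2) (is_derive_id x 1))))).
  rewrite /df /=; congr (_ - _ + _); first exact: mulr1.
case: (ltP 0 a) => a0'; last first.
  have -> : a = 0 by lra.
  by rewrite !(mulr0, addr0, subr0, ln1, oppr0).
have dd : forall x, x \in `]0, a[ -> is_derive x 1 f (df x).
  move=> x; rewrite in_itv /= => /andP[x0 x1].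
  exact: der (ltW x0) (lt_trans x1 a1).
have [z zin eq] : exists2 z, z \in `]0, a[ & f a - f 0 = df z * (a - 0).
  apply: MVT => //.
  have H : {in `[0, a], continuous f}.
    move=> x; rewrite in_itv /= => /andP[x0 x1].
    have := der x x0 (le_lt_trans x1 a1).
    by move=> /(@ex_derive _ _ _) /derivable1_diffP /differentiable_continuous.
  by apply: continuous_in_subspaceT => x; rewrite inE; exact: H.
have : 0 <= df z * (a - 0).
  move: zin; rewrite in_itv /= => /andP[z0 z1].
  have [p1 p2] := pos z (ltW z0) (lt_trans z1 a1).
  apply: mulr_ge0; last lra.
  rewrite /df.
  have e : (1 + c * z)^-1 * c - c + c ^+ 2 * (- ((1 - z)^-1 * -1) - 1)
        = c ^+ 2 * z * ((1 - z)^-1 - (1 + c * z)^-1).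
    by field; apply/andP; split; rewrite gt_eqF.
  rewrite e; apply: mulr_ge0; first by apply: mulr_ge0 => //; [apply: sqr_ge0 | apply: ltW].
  rewrite subr_ge0 lef_pV2 ?posrE //; nra.
have fE (x : R) : f x = ln (1 + c * x) - c * x + c ^+ 2 * (- ln (1 - x) - x) by [].
by rewrite -eq !fE !(mulr0, addr0, subr0, ln1, oppr0).
Qed.
Local Open Scope ereal_scope.
Lemma le_integral_any d (T : measurableType d) (R : realType)
  (mu : {measure set T -> \bar R}) (f g : T -> \bar R) :
  (forall x, 0 <= f x) -> (forall x, f x <= g x) ->
  \int[mu]_x f x <= \int[mu]_x g x.
Proof.
move=> f0 fg.
have g0 x : 0 <= g x by apply: le_trans (f0 x) (fg x).
rewrite /integral !patch_setT.
have -> : f^\- = cst 0 by apply/funext => x; exact: ge0_funenegE (fun x _ => f0 x) x (in_setT x).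
have -> : g^\- = cst 0 by apply/funext => x; exact: ge0_funenegE (fun x _ => g0 x) x (in_setT x).
have -> : f^\+ = f by apply/funext => x; exact: ge0_funeposE (fun x _ => f0 x) x (in_setT x).
have -> : g^\+ = g by apply/funext => x; exact: ge0_funeposE (fun x _ => g0 x) x (in_setT x).
apply: leeB => //.
apply: ge_ereal_sup => _ [h hf <-]; apply: ereal_sup_ubound; exists h => //= x.
exact: le_trans (hf x) (fg x).
Qed.

Local Close Scope ereal_scope.
Lemma key2 (R : realType) (xi u : R) : -1 <= xi <= 1 -> -1 < u < 1 ->
  expR (xi * u - xi ^+ 2 * (- ln (1 - `|u|) - `|u|)) <= 1 + xi * u.
Proof.
move=> /andP[x1 x2] /andP[u1 u2].
have p : 0 < 1 + xi * u.
  have [u0|u0] := leP 0 u.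
    have : 0 <= (xi + 1) * u by apply: mulr_ge0; lra.
    nra.
  have : 0 <= (1 - xi) * (- u) by apply: mulr_ge0; lra.
  nra.
have h : xi * u - xi ^+ 2 * (- ln (1 - `|u|) - `|u|) <= ln (1 + xi * u).
  have [u0|u0] := leP 0 u.
    have := @key R xi u; rewrite ger0_norm //.
    by move=> /(_ _ _) H; have := H ltac:(lra) ltac:(lra); lra.
  have := @key R (- xi) (- u); rewrite ltr0_norm // mulrNN sqrrN.
  by move=> /(_ _ _) H; have := H ltac:(lra) ltac:(lra); lra.
by rewrite -[leRHS]lnK ?posrE // ler_expR.
Qed.
Local Open Scope ereal_scope.

Lemma ptw (R : realType) (mu x Xh xi : R) : (0 <= x <= 1)%R -> (0 <= Xh < 1)%R ->
  (-1 <= xi <= 1)%R ->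
  expeR (xi%:E * (x%:E - mu%:E) - (xi ^+ 2)%:E * psiE `|x - Xh|%R)
    <= (((1 + xi * (x - Xh)) * expR (- (xi * (mu - Xh))))%R)%:E.
Proof.
move=> /andP[h3 h4] /andP[h1 h2] /andP[hx1 hx2].
have K0 : (0 < expR (- (xi * (mu - Xh))))%R by apply: expR_gt0.
rewrite /psiE; case: ifPn => hu.
  rewrite -EFinB /= lee_fin.
  have -> : (xi * (x - mu) - xi ^+ 2 * (- ln (1 - `|x - Xh|) - `|x - Xh|)
    = (xi * (x - Xh) - xi ^+ 2 * (- ln (1 - `|x - Xh|) - `|x - Xh|))
      + (- (xi * (mu - Xh))))%R by ring.
  rewrite expRD ler_wpM2r ?(ltW K0) //; apply: key2; first lra.
  by move: hu; rewrite ltr_norml.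
have u1 : (x - Xh = 1)%R.
  by move: hu; rewrite -leNgt ler_normr; case/orP; lra.
have [xi0|xi0] := eqVneq xi 0%R.
  subst xi; rewrite expr0n /= !mul0e !mul0r oppr0 expR0 addr0 mulr1 sube0 expeR0 lee_fin /= lexx.
  done.
have xi2 : (0 < xi ^+ 2)%R by rewrite exprn_even_gt0.
rewrite mulry gtr0_sg // mul1e -EFinB -EFinM /= lee_fin.
by apply: mulr_ge0; [rewrite u1; lra | exact: ltW].
Qed.

Theorem mainTheorem2 (R : realType) (d : measure_display) (T : measurableType d)
  (P : probability T R) (X : T -> R)
  (hXm : measurable_fun setT X) (hX01 : forall t, (0 <= X t <= 1)%R)
  (Xh : R) (hXh : (0 <= Xh < 1)%R) (xi : R) (hxi : (-1 <= xi <= 1)%R) :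
  \int[P]_t expeR (xi%:E * ((X t)%:E - 'E_P[X])
                   - (xi ^+ 2)%:E * psiE `|X t - Xh|%R) <= 1.
Proof.
have intX : P.-integrable setT (EFin \o X).
  apply: measurable_bounded_integrable => //.
  - by apply: (le_lt_trans (probability_le1 P measurableT)); rewrite ltry.
  - exists 1%R; split => // M M1 x _ /=; rewrite ger0_norm; have := hX01 x; lra.
have EX : 'E_P[X] = (fine 'E_P[X])%:E.
  by rewrite fineK // unlock; exact: integrable_fin_num.
rewrite EX; set mu := fine 'E_P[X].
set K := expR (- (xi * (mu - Xh)))%R.
have K0 : (0 < K)%R by apply: expR_gt0.
have pt t := @ptw R mu (X t) Xh xi (hX01 t) hXh hxi.
apply: le_trans (@le_integral_any _ _ _ P _ _ (fun t => expeR_ge0 _) pt) _.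
rewrite -/K.
have EX' : \int[P]_x (X x)%:E = mu%:E by rewrite -EX unlock.
rewrite (eq_integral (fun x => (K * (1 - xi * Xh))%:E + (K * xi)%:E * (X x)%:E)); last first.
  by move=> x _; rewrite -EFinM -EFinD; congr EFin; ring.
rewrite integralD //; last 2 first.
- exact: finite_measure_integrable_cst.
- exact: integrableZl.
rewrite integralZl // EX'.
have -> : \int[P]_x (K * (1 - xi * Xh))%:E = (K * (1 - xi * Xh))%:E.
  by have := expectation_cst P (K * (1 - xi * Xh))%R; rewrite unlock.
rewrite -EFinM -EFinD lee_fin.
have := expR_ge1Dx (xi * (mu - Xh)).
have e1 : (K * expR (xi * (mu - Xh)) = 1)%R by rewrite /K -expRD addNr expR0.
have e2 : (K * (1 - xi * Xh) + K * xi * mu = K * (1 + xi * (mu - Xh)))%R by ring.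
rewrite e2 => h.
by rewrite -[leRHS]e1; apply: ler_wpM2l; [exact: ltW | exact: h].
Qed.
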